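(* Let $\mathcal L=(\Sigma,X)$ be a language and $\Lambda$ a fuzzy theory in $\mathcal L$. Let $\mathscr F_\Lambda$ be a left adjoint of $\mathscr U_\Lambda:\mathbf{Mod}(\Lambda)\to\mathbf{Fuz}_H$ with unit $\eta$, let $\nabla(X)=(X,c_\bot)$ (constant membership $\bot$), and let $\iota_{nat}:X\to$ (underlying set of $\mathscr F_\Lambda(\nabla(X))$) be the underlying function of $\eta_{\nabla(X)}$. Then for every formula $\phi$ of $\mathcal L$: $\mathscr F_\Lambda(\nabla(X))\vDash_{\iota_{nat}}\phi$ if and only if $\vdash_\Lambda\phi$.
   Context: $H$ is a frame with bottom $\bot$. An $H$-fuzzy set is a pair $(A,\mu_A)$ of a set $A$ and a function $\mu_A:A\to H$; an arrow $f:(A,\mu_A)\to(B,\mu_B)$ is a function with $\mu_A(x)\le\mu_B(f(x))$; they form $\mathbf{Fuz}_H$. For $n\ge1$, $(A,\mu_A)^n=(A^n,\mu)$ with $\mu(a_1,\dots,a_n)=\bigwedge_i\mu_A(a_i)$. A signature $\Sigma=(O,\mathrm{ar},C)$ consists of a set $O$ of operation symbols with arity $\mathrm{ar}:O\to\{1,2,3,\dots\}$ and a set $C$ of constant symbols. A language is a pair $\mathcal L=(\Sigma,X)$ with $X$ a set of variables. $\mathrm{Terms}(\mathcal L)$ is the smallest set containing $X\sqcup C$ and containing $f(t_1,\dots,t_{\mathrm{ar}(f)})$ whenever $f\in O$ and all $t_i\in\mathrm{Terms}(\mathcal L)$. A formula is either an equation $s\equiv t$ ($s,t$ terms) or a membership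 proposition $\mathsf E_l(t)$ with $l\in H$ and $t$ a term. A sequent $\Gamma\vdash\psi$ is a pair of a (possibly infinite) set $\Gamma$ of formulas and a formula $\psi$; $\vdash\psi$ means $\emptyset\vdash\psi$. A fuzzy theory in $\mathcal L$ is a set of sequents. For $\sigma:X\to\mathrm{Terms}(\mathcal L)$, $t[\sigma]$ is simultaneous substitution, extended to formulas by $(s\equiv t)[\sigma]=(s[\sigma]\equiv t[\sigma])$, $\mathsf E_l(t)[\sigma]=\mathsf E_l(t[\sigma])$, and to sets of formulas elementwise. The rules of the fuzzy sequent calculus are (for all sets of formulas $\Gamma,\Delta,\Phi$, formulas $\phi,\psi$, terms, $l,l'\in H$): (A) $\Gamma\vdash\phi$ if $\phi\in\Gamma$; (Weak) from $\Gamma\vdash\phi$ infer $\Gamma\cup\Delta\vdash\phi$; (Cut) from $\Gamma\vdash\phi$ for all $\phi\in\Phi$ and $\Phi\vdash\psi$ infer $\Gamma\vdash\psi$; (Refl) $\Gamma\vdash s\equiv s$; (Sym) from $\Gamma\vdash s\equiv t$ infer $\Gamma\vdash t\equiv s$; (Trans) from $\Gamma\vdash s\equiv t$ and $\Gamma\vdash t\equiv u$ infer $\Gamma\vdash s\equiv u$; (Sub) from $\Gamma\vdash\psi$ infer $\Gamma[\sigma]\vdash\psi[\sigma]$ for any $\sigma:X\to\mathrm{Terms}(\mathcal L)$; (Cong) for $f\in O$ with $n=\mathrm{ar}(f)$, from $\Gamma\vdash t_i\equiv s_i$ ($i=1,\dots,n$) infer $\Gamma\vdash f(t_1,\dots,t_n)\equiv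 f(s_1,\dots,s_n)$; (Inf) $\Gamma\vdash\mathsf E_\bot(t)$; (Mon) from $\Gamma\vdash\mathsf E_l(t)$ infer $\Gamma\vdash\mathsf E_{l\wedge l'}(t)$; (Exp) for $f\in O$ with $n=\mathrm{ar}(f)$, from $\Gamma\vdash\mathsf E_{l_i}(t_i)$ ($i=1,\dots,n$) infer $\Gamma\vdash\mathsf E_{l_1\wedge\dots\wedge l_n}(f(t_1,\dots,t_n))$; (Sup) for $S\subseteq H$, from $\Gamma\vdash\mathsf E_l(t)$ for all $l\in S$ infer $\Gamma\vdash\mathsf E_{\sup S}(t)$; (Fun) from $\Gamma\vdash t\equiv s$ and $\Gamma\vdash\mathsf E_l(t)$ infer $\Gamma\vdash\mathsf E_l(s)$. The deductive closure $\Lambda^{\vdash}$ of a theory $\Lambda$ is the smallest set of sequents containing $\Lambda$ and closed under all these rules; $\vdash_\Lambda\phi$ means $(\emptyset\vdash\phi)\in\Lambda^{\vdash}$. A $\Sigma$-algebra $\mathcal A=((A,\mu_A),\Sigma^{\mathcal A})$ is an $H$-fuzzy set $(A,\mu_A)$ together with, for each $f\in O$, an arrow $f^{\mathcal A}:(A,\mu_A)^{\mathrm{ar}(f)}\to(A,\mu_A)$ of $\mathbf{Fuz}_H$ and, for each $c\in C$, an element $c^{\mathcal A}\in A$. A morphism of $\Sigma$-algebras is an arrow of $\mathbf{Fuz}_H$ between the carriers preserving all constants and commuting with all operations. An assignment is a function $\iota:X\to A$; evaluation: $x^{\mathcal A,\iota}=\iota(x)$, $c^{\mathcal A,\iota}=c^{\mathcal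 A}$, $f(t_1,\dots,t_n)^{\mathcal A,\iota}=f^{\mathcal A}(t_1^{\mathcal A,\iota},\dots,t_n^{\mathcal A,\iota})$. $\mathcal A\vDash_\iota s\equiv t$ iff $s^{\mathcal A,\iota}=t^{\mathcal A,\iota}$; $\mathcal A\vDash_\iota\mathsf E_l(t)$ iff $l\le\mu_A(t^{\mathcal A,\iota})$. $\mathcal A$ satisfies $\Gamma\vdash\psi$ if for every assignment $\iota$ with $\mathcal A\vDash_\iota\phi$ for all $\phi\in\Gamma$ one has $\mathcal A\vDash_\iota\psi$. $\mathcal A$ is a model of a theory $\Lambda$ if it satisfies every sequent of $\Lambda$. $\mathbf{Mod}(\Lambda)$ is the full subcategory of the category of $\Sigma$-algebras on the models of $\Lambda$, and $\mathscr U_\Lambda:\mathbf{Mod}(\Lambda)\to\mathbf{Fuz}_H$ is the forgetful functor to carriers. *)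

(* Defs.v *)
From mathcomp Require Import all_boot.
Set Implicit Arguments.
Unset Strict Implicit.
Unset Printing Implicit Defensive.

Record frame := Frame {
  fcar :> Type;
  fle : fcar -> fcar -> Prop;
  fmeet : fcar -> fcar -> fcar;
  fsup : (fcar -> Prop) -> fcar;
  fle_refl : forall a, fle a a;
  fle_trans : forall a b c, fle a b -> fle b c -> fle a c;
  fle_antisym : forall a b, fle a b -> fle b a -> a = b;
  fmeet_l : forall a b, fle (fmeet a b) a;
  fmeet_r : forall a b, fle (fmeet a b) b;
  fmeet_glb : forall a b c, fle c a -> fle c b -> fle c (fmeet a b);
  fsup_ub : forall (S : fcar -> Prop) a, S a -> fle a (fsup S);
  fsup_lub : forall (S : fcar -> Prop) b, (forall a, S a -> fle a b) -> fle (fsup S) b;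
  fdistr : forall a (S : fcar -> Prop),
      fmeet a (fsup S) = fsup (fun c => exists2 s, S s & c = fmeet a s)
}.

Definition fbot (H : frame) : H := fsup (fun _ : H => False).
Definition ftop (H : frame) : H := fsup (fun _ : H => True).
Definition fbigmeet (H : frame) (n : nat) (l : 'I_n -> H) : H :=
  foldr (@fmeet H) (ftop H) (map l (enum 'I_n)).

Record signature := Signature {
  sig_O : Type;
  sig_ar : sig_O -> nat;
  sig_ar_pos : forall f, 0 < sig_ar f;
  sig_C : Type
}.

Record language := Language { lang_sig : signature; lang_X : Type }.

Section Syntax.
Variable L : language.
Local Notation O := (sig_O (lang_sig L)).
Local Notation ar := (@sig_ar (lang_sig L)).
Local Notation C := (sig_C (lang_sig L)).
Local Notation X := (lang_X L).

Inductive term : Type :=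
| Tvar : X -> term
| Tcst : C -> term
| Tapp : forall f : O, ('I_(ar f) -> term) -> term.
Arguments Tapp f ts : clear implicits.

Fixpoint tsubst (s : X -> term) (t : term) : term :=
  match t with
  | Tvar x => s x
  | Tcst c => Tcst c
  | Tapp f ts => Tapp f (fun i => tsubst s (ts i))
  end.

Variable H : frame.

Inductive formula : Type :=
| Feq : term -> term -> formula
| Fmem : H -> term -> formula.

Definition fsubst (s : X -> term) (phi : formula) : formula :=
  match phi with
  | Feq a b => Feq (tsubst s a) (tsubst s b)
  | Fmem l a => Fmem l (tsubst s a)
  end.

Definition fset_subst (s : X -> term) (G : formula -> Prop) : formula -> Prop :=
  fun psi => exists2 phi, G phi & psi = fsubst s phi.

(* a fuzzy theory: a set of sequents (Gamma |- psi) *)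
Definition theory := (formula -> Prop) -> formula -> Prop.

Inductive derivable (Lam : theory) : (formula -> Prop) -> formula -> Prop :=
| d_theory : forall G psi, Lam G psi -> derivable Lam G psi
| d_A : forall (G : formula -> Prop) phi, G phi -> derivable Lam G phi
| d_Weak : forall G D phi, derivable Lam G phi ->
    derivable Lam (fun x => G x \/ D x) phi
| d_Cut : forall G (P : formula -> Prop) psi,
    (forall phi, P phi -> derivable Lam G phi) -> derivable Lam P psi ->
    derivable Lam G psi
| d_Refl : forall G s, derivable Lam G (Feq s s)
| d_Sym : forall G s t, derivable Lam G (Feq s t) -> derivable Lam G (Feq t s)
| d_Trans : forall G s t u, derivable Lam G (Feq s t) -> derivable Lam G (Feq t u) ->
    derivable Lam G (Feq s u)
| d_Sub : forall G psi (s : X -> term), derivable Lam G psi ->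
    derivable Lam (fset_subst s G) (fsubst s psi)
| d_Cong : forall G (f : O) (ts ss : 'I_(ar f) -> term),
    (forall i, derivable Lam G (Feq (ts i) (ss i))) ->
    derivable Lam G (Feq (Tapp f ts) (Tapp f ss))
| d_Inf : forall G t, derivable Lam G (Fmem (fbot H) t)
| d_Mon : forall G l l' t, derivable Lam G (Fmem l t) ->
    derivable Lam G (Fmem (fmeet l l') t)
| d_Exp : forall G (f : O) (ls : 'I_(ar f) -> H) (ts : 'I_(ar f) -> term),
    (forall i, derivable Lam G (Fmem (ls i) (ts i))) ->
    derivable Lam G (Fmem (fbigmeet ls) (Tapp f ts))
| d_Sup : forall G (S : H -> Prop) t,
    (forall l, S l -> derivable Lam G (Fmem l t)) ->
    derivable Lam G (Fmem (fsup S) t)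
| d_Fun : forall G t s l, derivable Lam G (Feq t s) -> derivable Lam G (Fmem l t) ->
    derivable Lam G (Fmem l s).

Definition provable (Lam : theory) (phi : formula) : Prop :=
  derivable Lam (fun _ => False) phi.

Record algebra := Algebra {
  acar :> Type;
  amu : acar -> H;
  aop : forall f : O, ('I_(ar f) -> acar) -> acar;
  acst : C -> acar;
  (* each f^A is an arrow (A,mu)^n -> (A,mu) of Fuz_H *)
  aop_arrow : forall f (a : 'I_(ar f) -> acar),
      fle (fbigmeet (fun i => amu (a i))) (amu (@aop f a))
}.
Arguments aop : clear implicits.
Arguments amu : clear implicits.
Arguments acst : clear implicits.

Fixpoint eval (A : algebra) (io : X -> A) (t : term) : A :=
  match t with
  | Tvar x => io x
  | Tcst c => acst A c
  | Tapp f ts => aop A f (fun i => eval io (ts i))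
  end.

Definition sat (A : algebra) (io : X -> A) (phi : formula) : Prop :=
  match phi with
  | Feq s t => eval io s = eval io t
  | Fmem l t => fle l (amu A (eval io t))
  end.

Definition sat_sequent (A : algebra) (G : formula -> Prop) (psi : formula) : Prop :=
  forall io : X -> A, (forall phi, G phi -> sat io phi) -> sat io psi.

Definition is_model (Lam : theory) (A : algebra) : Prop :=
  forall G psi, Lam G psi -> sat_sequent A G psi.

Definition is_morphism (A B : algebra) (h : A -> B) : Prop :=
  [/\ forall x, fle (amu A x) (amu B (h x)),
      forall c, h (acst A c) = acst B c &
      forall f (a : 'I_(ar f) -> A), h (aop A f a) = aop B f (fun i => h (a i))].

(* eta : nabla(X) -> U_Lambda(F) is a universal arrow from nabla(X) = (X, const bot)
   to the forgetful functor U_Lambda : Mod(Lambda) -> Fuz_H, i.e. the component at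
   nabla(X) of the unit of a left adjoint F_Lambda -| U_Lambda. *)
Definition universal_arrow (Lam : theory) (F : algebra) (eta : X -> F) : Prop :=
  (forall x, fle (fbot H) (amu F (eta x))) /\
  forall B : algebra, is_model Lam B ->
  forall g : X -> B, (forall x, fle (fbot H) (amu B (g x))) ->
    (exists h : F -> B, is_morphism h /\ forall x, h (eta x) = g x) /\
    (forall h1 h2 : F -> B,
        is_morphism h1 -> (forall x, h1 (eta x) = g x) ->
        is_morphism h2 -> (forall x, h2 (eta x) = g x) ->
        forall y, h1 y = h2 y).

End Syntax.

(* Main.v *)
Require Import Defs.
From mathcomp Require Import all_boot.
From Stdlib Require Import FunctionalExtensionality PropExtensionality ProofIrrelevance ClassicalEpsilon.

Lemma fbot_le (H : frame) (a : H) : fle (fbot H) a.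
Proof. apply fsup_lub; intros _ []. Qed.

Lemma fbigmeet_mono (H : frame) n (l l' : 'I_n -> H) :
  (forall i, fle (l i) (l' i)) -> fle (fbigmeet l) (fbigmeet l').
Proof.
intros Hl; unfold fbigmeet. elim: (enum 'I_n) => [|i s IH] /=.
- apply fle_refl.
- apply fmeet_glb.
  + exact (fle_trans (fmeet_l _ _) (Hl i)).
  + exact (fle_trans (fmeet_r _ _) IH).
Qed.

Lemma eval_subst (H : frame) (L : language) (A : algebra L H) (io : lang_X L -> A) s t :
  eval io (tsubst s t) = eval (fun x => eval io (s x)) t.
Proof.
induction t as [x|c|f ts IH]; simpl; auto.
f_equal; apply functional_extensionality; intro i; apply IH.
Qed.

Lemma sat_subst (H : frame) (L : language) (A : algebra L H) (io : lang_X L -> A) s phi :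
  sat io (fsubst s phi) <-> sat (fun x => eval io (s x)) phi.
Proof. destruct phi; simpl; rewrite !eval_subst; tauto. Qed.

Lemma soundness (H : frame) (L : language) (Lam : theory L H) (A : algebra L H)
  (HA : is_model Lam A) G psi : derivable Lam G psi -> sat_sequent A G psi.
Proof.
induction 1; intros io Hio; simpl in *.
- exact (HA _ _ H0 io Hio).
- auto.
- apply IHderivable; intros; apply Hio; auto.
- apply IHderivable; intros phi Pphi; apply (H1 phi Pphi io Hio).
- reflexivity.
- symmetry; apply (IHderivable io Hio).
- rewrite (IHderivable1 io Hio); apply (IHderivable2 io Hio).
- apply sat_subst. apply IHderivable. intros phi Gphi. apply sat_subst. apply Hio.
  exists phi; auto.
- f_equal; apply functional_extensionality; intro i; apply (H1 i io Hio).
- apply fbot_le.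
- exact (fle_trans (fmeet_l _ _) (IHderivable io Hio)).
- eapply fle_trans; [|apply aop_arrow].
  apply fbigmeet_mono; intro i; apply (H1 i io Hio).
- apply fsup_lub; intros l Sl; apply (H1 l Sl io Hio).
- rewrite -(IHderivable1 io Hio); apply (IHderivable2 io Hio).
Qed.

Section TermModel.
Context {H : frame} {L : language} (Lam : theory L H).

Definition cls (t : term L) : term L -> Prop := fun u => provable Lam (Feq _ t u).
Definition TM := {P : term L -> Prop | exists t, P = cls t}.
Definition rep (a : TM) : term L :=
  proj1_sig (constructive_indefinite_description _ (proj2_sig a)).
Lemma rep_spec a : proj1_sig a = cls (rep a).
Proof. unfold rep. destruct (constructive_indefinite_description _ _); auto. Qed.
Definition mk (t : term L) : TM := exist _ (cls t) (ex_intro _ t erefl).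

Lemma TM_eq (a b : TM) : proj1_sig a = proj1_sig b -> a = b.
Proof. destruct a, b; simpl; intros ->; f_equal; apply proof_irrelevance. Qed.

Lemma prov_refl t : provable Lam (Feq _ t t).
Proof. apply d_Refl. Qed.
Lemma prov_sym {t u} : provable Lam (Feq _ t u) -> provable Lam (Feq _ u t).
Proof. apply d_Sym. Qed.
Lemma prov_trans {t u v} : provable Lam (Feq _ t u) -> provable Lam (Feq _ u v) ->
  provable Lam (Feq _ t v).
Proof. apply d_Trans. Qed.

Lemma cls_eq t u : cls t = cls u <-> provable Lam (Feq _ t u).
Proof.
split.
- intro E. have : cls t t by apply prov_refl. rewrite E. apply prov_sym.
- intro P. apply functional_extensionality; intro v; apply propositional_extensionality.
  unfold cls; split; intro Q.
  + exact (prov_trans (prov_sym P) Q).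
  + exact (prov_trans P Q).
Qed.

Lemma mk_eq t u : mk t = mk u <-> provable Lam (Feq _ t u).
Proof.
split.
- intro E. apply cls_eq. exact (f_equal (@proj1_sig _ _) E).
- intro P. apply TM_eq; simpl. by apply cls_eq.
Qed.

Lemma rep_mk t : provable Lam (Feq _ (rep (mk t)) t).
Proof. apply prov_sym, cls_eq. exact (rep_spec (mk t)). Qed.

Lemma mk_rep a : mk (rep a) = a.
Proof. apply TM_eq; simpl. by rewrite rep_spec. Qed.

Lemma mem_down {m l t} : provable Lam (Fmem m t) -> fle l m -> provable Lam (Fmem l t).
Proof.
intros P le. have E : fmeet m l = l.
{ apply fle_antisym; [apply fmeet_r| apply fmeet_glb; [exact le| apply fle_refl]]. }
rewrite -E. by apply d_Mon.
Qed.

Definition TMmu (a : TM) : H := fsup (fun l => provable Lam (Fmem l (rep a))).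
Lemma TMmu_prov a : provable Lam (Fmem (TMmu a) (rep a)).
Proof. by apply d_Sup. Qed.
Definition TMop (f : sig_O (lang_sig L)) (a : 'I_(sig_ar f) -> TM) : TM :=
  mk (Tapp (fun i => rep (a i))).
Definition TMcst (c : sig_C (lang_sig L)) : TM := mk (Tcst c).

Lemma TM_arrow f (a : 'I_(sig_ar f) -> TM) :
  fle (fbigmeet (fun i => TMmu (a i))) (TMmu (TMop f a)).
Proof.
apply fsup_ub. unfold TMop.
apply d_Fun with (Tapp (fun i => rep (a i))).
- apply prov_sym, rep_mk.
- apply d_Exp; intro i; apply TMmu_prov.
Qed.

Definition TMalg : algebra L H := @Algebra L H TM TMmu TMop TMcst TM_arrow.

Lemma eval_TM (io : lang_X L -> TMalg) t :
  eval io t = mk (tsubst (fun x => rep (io x)) t).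
Proof.
induction t as [x|c|f ts IH]; simpl.
- by rewrite mk_rep.
- reflexivity.
- have -> : (fun i => eval io (ts i)) = fun i => mk (tsubst (fun x => rep (io x)) (ts i)).
  { apply functional_extensionality; intro i; apply IH. }
  unfold TMop. apply mk_eq. apply d_Cong. intro i. apply rep_mk.
Qed.

Lemma sat_TM (io : lang_X L -> TMalg) phi :
  sat io phi <-> provable Lam (fsubst (fun x => rep (io x)) phi).
Proof.
destruct phi as [s t|l t]; simpl; rewrite ?eval_TM.
- apply mk_eq.
- split.
  + intro le. apply d_Fun with (rep (mk (tsubst (fun x => rep (io x)) t))).
    * apply rep_mk.
    * exact (mem_down (TMmu_prov _) le).
  + intro P. apply fsup_ub. apply d_Fun with (tsubst (fun x => rep (io x)) t).
    * apply prov_sym, rep_mk.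
    * exact P.
Qed.

Lemma TM_model : is_model Lam TMalg.
Proof.
intros G psi HL io Hio. apply sat_TM.
apply d_Cut with (fset_subst (fun x => rep (io x)) G).
- intros phi [phi0 G0 ->]. apply sat_TM, Hio, G0.
- apply d_Sub, d_theory, HL.
Qed.

Lemma subst_cong (s1 s2 : lang_X L -> term L) t :
  (forall x, provable Lam (Feq _ (s1 x) (s2 x))) ->
  provable Lam (Feq _ (tsubst s1 t) (tsubst s2 t)).
Proof.
intro Hs. induction t as [x|c|f ts IH]; simpl.
- apply Hs.
- apply prov_refl.
- apply d_Cong; intro i; apply IH.
Qed.

End TermModel.

Lemma tsubst_id (L : language) (t : term L) : tsubst (@Tvar L) t = t.
Proof.
induction t as [x|c|f ts IH]; simpl; auto.
f_equal; apply functional_extensionality; intro i; apply IH.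
Qed.

Lemma morph_eval {H : frame} {L : language} {A B : algebra L H} {h : A -> B}
  (hm : is_morphism h) (io : lang_X L -> A) t :
  h (eval io t) = eval (fun x => h (io x)) t.
Proof.
destruct hm as [_ hc hop].
induction t as [x|c|f ts IH]; simpl; auto.
rewrite hop; f_equal; apply functional_extensionality; intro i; apply IH.
Qed.

Theorem lemma37 (H : frame) (L : language) (Lam : theory L H)
  (F : algebra L H) (HF : is_model Lam F)
  (iota_nat : lang_X L -> F) (Hunit : universal_arrow Lam iota_nat)
  (phi : formula L H) :
  sat iota_nat phi <-> provable Lam phi.
Proof.
split; last first.
{ intro P. exact (@soundness H L Lam F HF _ _ P iota_nat (fun _ (Q : False) => False_ind _ Q)). }
intro S.
destruct Hunit as [_ U].
destruct (U (TMalg Lam) (TM_model Lam) (fun x => mk Lam (Tvar x)) (fun x => fbot_le _ _))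
  as [[h [hm heta]] _].
have Hio : (fun x => h (iota_nat x)) = (fun x => mk Lam (Tvar x)).
{ apply functional_extensionality; intro x; apply heta. }
have S' : sat (A := TMalg Lam) (fun x => mk Lam (Tvar x)) phi.
{ rewrite -Hio. destruct phi as [s t|l t]; simpl in *.
  - rewrite -!(morph_eval hm). by rewrite S.
  - rewrite -(morph_eval hm). destruct hm as [hmu _ _].
    exact (fle_trans S (hmu _)). }
apply sat_TM in S'.
have Hs : forall x, provable Lam (Feq _ (rep Lam (mk Lam (Tvar x))) (Tvar x)).
{ intro x; apply (rep_mk Lam). }
destruct phi as [s t|l t]; simpl in S'.
- have E1 := subst_cong Lam _ _ s Hs. have E2 := subst_cong Lam _ _ t Hs.
  rewrite !tsubst_id in E1 E2.
  exact (prov_trans Lam (prov_trans Lam (prov_sym Lam E1) S') E2).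
- have E := subst_cong Lam _ _ t Hs. rewrite tsubst_id in E.
  exact (d_Fun E S').
Qed.
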